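(* Let $A$ be a nonempty finite set of $n$ alternatives. A choice rule $C$ on $A$ is (capacity-constrained) lexicographic if and only if it satisfies capacity-filling, gross substitutes, monotonicity, and the irrelevance of accepted alternatives.
   Context: Let $\mathcal{A}$ be the set of all nonempty subsets of $A$. A (capacity-constrained) choice rule is a map $C$ assigning to each problem $(S,q)\in\mathcal{A}\times\{1,\dots,n\}$ a nonempty set $C(S,q)\subseteq S$ with $|C(S,q)|\le q$; write $R(S,q)=S\setminus C(S,q)$ for the rejected alternatives. A priority ordering is a complete, transitive and antisymmetric binary relation on $A$; a priority profile is an ordered list $(\succ_1,\dots,\succ_n)$ of $n$ priority orderings. $C$ is (capacity-constrained) lexicographic for $(\succ_1,\dots,\succ_n)$ if for every $(S,q)$, $C(S,q)$ is the set obtained by choosing the $\succ_1$-highest alternative in $S$, then the $\succ_2$-highest alternative among the remaining alternatives of $S$, and so on, until $q$ alternatives have been chosen or no alternative is left. $C$ is (capacity-constrained) lexicographic if it is lexicographic for some priority profile. Capacity-filling: for each $(S,q)$, $|C(S,q)|=\min\{|S|,q\}$. Gross substitutes: for each $(S,q)$ and each $a,b\in S$ with $a\neq b$, if $a\in C(S,q)$ then $a\in C(S\setminus\{b\},q)$. Monotonicity: for each $S\in\mathcal{A}$ and $q\in\{1,\dots,n-1\}$, $C(S,q)\subseteq C(S,q+1)$. Irrelevance of accepted alternatives: for each $S,S'\in\mathcal{A}$ and $q\in\{1,\dots,n-1\}$, if $R(S,q)=R(S',q)$ then $C(S,q+1)\cap R(S,q)=C(S',q+1)\cap R(S',q)$.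 *)

(* Defs.v *)
From mathcomp Require Import all_boot.
Set Implicit Arguments. Unset Strict Implicit. Unset Printing Implicit Defensive.

Section Choice.
Variable A : finType.

(* A choice rule: C S q is only meaningful for S nonempty and 1 <= q <= n = #|A|. *)
Definition choice_fun := {set A} -> nat -> {set A}.

Definition in_domain (S : {set A}) (q : nat) := (S != set0) && (0 < q <= #|A|).

Definition is_choice_rule (C : choice_fun) : Prop :=
  forall S q, in_domain S q ->
    [/\ C S q \subset S, C S q != set0 & #|C S q| <= q].

Definition rejected (C : choice_fun) S q := S :\: C S q.

Definition priority_ordering (r : rel A) : Prop :=
  [/\ (forall x y, r x y || r y x),
      (forall x y z, r x y -> r y z -> r x z) &
      (forall x y, r x y -> r y x -> x = y)].

Definition best (r : rel A) (T : {set A}) : option A :=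
  [pick x in T | [forall y in T, r x y]].

Fixpoint lex_choice (prof : seq (rel A)) (R : {set A}) (q : nat) : {set A} :=
  match prof, q with
  | r :: prof', q'.+1 =>
      match best r R with
      | Some x => x |: lex_choice prof' (R :\ x) q'
      | None => set0
      end
  | _, _ => set0
  end.

Definition lexicographic (C : choice_fun) : Prop :=
  exists prof : #|A|.-tuple (rel A),
    (forall i : 'I_#|A|, priority_ordering (tnth prof i)) /\
    (forall S q, in_domain S q -> C S q = lex_choice prof S q).

Definition capacity_filling (C : choice_fun) : Prop :=
  forall S q, in_domain S q -> #|C S q| = minn #|S| q.

Definition gross_substitutes (C : choice_fun) : Prop :=
  forall S q, in_domain S q -> forall a b, a \in S -> b \in S -> a != b ->
    a \in C S q -> a \in C (S :\ b) q.

Definition monotonicity (C : choice_fun) : Prop :=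
  forall S q, S != set0 -> 0 < q -> q < #|A| -> C S q \subset C S q.+1.

Definition irrelevance_accepted (C : choice_fun) : Prop :=
  forall S S' q, S != set0 -> S' != set0 -> 0 < q -> q < #|A| ->
    rejected C S q = rejected C S' q ->
    C S q.+1 :&: rejected C S q = C S' q.+1 :&: rejected C S' q.

End Choice.

(* Main.v *)
Require Import Defs.
From mathcomp Require Import all_boot zify.
Set Implicit Arguments. Unset Strict Implicit. Unset Printing Implicit Defensive.

Section Gen.
Variable A : finType.

Lemma po_max (r : rel A) (S : {set A}) : priority_ordering r -> S != set0 ->
  exists2 x, x \in S & forall y, y \in S -> r x y.
Proof.
case=> tot tr _.
suff H : forall k (S : {set A}), #|S| <= k -> S != set0 ->
  exists2 x, x \in S & forall y, y \in S -> r x y by apply: H (leqnn _).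
elim=> [|k IH] T hk hT.
  by move: hT; rewrite -card_gt0; lia.
case: (set_0Vmem T) => [E|[a aT]]; first by rewrite E eqxx in hT.
case: (set_0Vmem (T :\ a)) => [E|[b bT]].
  exists a => // y yT; case: (y =P a) => [->|ne].
    by have := tot a a; rewrite orbb.
  have H : y \in T :\ a by rewrite !inE yT andbT; apply/eqP.
  by rewrite E inE in H.
have hk' : #|T :\ a| <= k by move: hk; rewrite (cardsD1 a T) aT; lia.
have hne : T :\ a != set0 by apply/set0Pn; exists b.
have [m mT Hm] := IH _ hk' hne.
have mT' : m \in T by move: mT; rewrite !inE => /andP[].
case/orP: (tot m a) => ma.
  exists m => // y yT; case: (y =P a) => [->//|ne].
  by apply: Hm; rewrite !inE yT andbT; apply/eqP.
exists a => // y yT; case: (y =P a) => [->|ne].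
  by have := tot a a; rewrite orbb.
apply: tr ma (Hm _ _); by rewrite !inE yT andbT; apply/eqP.
Qed.

Lemma best_some (r : rel A) (S : {set A}) x : best r S = Some x ->
  x \in S /\ forall y, y \in S -> r x y.
Proof.
rewrite /best; case: pickP => // z /andP[zS /forallP H] [<-]; split=> // y yS.
by have := H y; rewrite yS.
Qed.

Lemma best_none (r : rel A) (S : {set A}) : priority_ordering r -> best r S = None -> S = set0.
Proof.
move=> po; rewrite /best; case: pickP => // H _.
case: (set_0Vmem S) => // [[a aS]].
have hne : S != set0 by apply/set0Pn; exists a.
have [x xS Hx] := po_max po hne.
have := H x; rewrite xS /=; move/negP; case; apply/forallP => y.
by apply/implyP; apply: Hx.
Qed.

Lemma best0 (r : rel A) : best r set0 = None.
Proof. by rewrite /best; case: pickP => // x; rewrite in_set0. Qed.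

Lemma best_eq (r : rel A) (S : {set A}) x : priority_ordering r -> x \in S ->
  (forall y, y \in S -> r x y) -> best r S = Some x.
Proof.
move=> po xS Hx; case E: (best r S) => [z|].
  have [zS Hz] := best_some E; case: po => _ _ anti.
  by rewrite (anti z x (Hz x xS) (Hx z zS)).
by move: (best_none po E) xS => ->; rewrite inE.
Qed.

Definition opt1 (o : option A) : {set A} := if o is Some x then [set x] else set0.

Lemma lex0 prof (S : {set A}) : lex_choice prof S 0 = set0.
Proof. by case: prof. Qed.

Lemma lex_sub prof (S : {set A}) q : lex_choice prof S q \subset S.
Proof.
elim: prof S q => [|r p IH] S [|q] /=; rewrite ?sub0set //.
case E: (best r S) => [x|]; last exact: sub0set.
have [xS _] := best_some E.
rewrite subUset sub1set xS /=; apply: subset_trans (IH _ _) _; exact: subD1set.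
Qed.

Definition dflt : rel A := fun _ _ => true.

Lemma lex_step prof (S : {set A}) q :
  (forall i, i < size prof -> forall T, best (nth dflt prof i) T = None -> T = set0) ->
  q < size prof ->
  lex_choice prof S q.+1 =
  lex_choice prof S q :|: opt1 (best (nth dflt prof q) (S :\: lex_choice prof S q)).
Proof.
elim: prof S q => [|r p IH] S q Hb Hq //.
case: q Hq => [|q] Hq.
  rewrite /= setD0 set0U; case E: (best r S) => [x|] /=; by rewrite ?lex0 ?setU0.
rewrite /=; case E: (best r S) => [x|] /=.
  rewrite IH //; last first.
    by move=> i hi; apply: (Hb i.+1).
  by rewrite setUA setDDl.
have -> := Hb 0 isT _ E.
by rewrite set0D best0 setU0.
Qed.

End Gen.

Section Fwd.
Variable A : finType.
Variable prof : seq (rel A).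
Hypothesis Hpo : forall i, i < size prof -> priority_ordering (nth (@dflt A) prof i).

Let L S q := lex_choice prof S q.

Lemma Hb : forall i, i < size prof -> forall T, best (nth (@dflt A) prof i) T = None -> T = set0.
Proof. by move=> i hi T; apply: best_none; apply: Hpo. Qed.

Lemma L_card S q : q <= size prof -> #|L S q| = minn #|S| q.
Proof.
elim: q => [|q IH] hq; first by rewrite /L lex0 cards0; lia.
rewrite /L (@lex_step _ prof S q Hb hq).
have IH' := IH (ltnW hq); rewrite /L in IH'.
have sub := lex_sub prof S q.
case E: (best _ _) => [x|] /=.
  have [xin _] := best_some E.
  move: xin; rewrite inE => /andP[xL xS].
  rewrite setUC cardsU1 xL IH' /=.
  have : #|lex_choice prof S q| < #|S|.
    apply: proper_card; rewrite properE sub /=; apply/subsetPn; by exists x.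
  rewrite IH'; lia.
have := Hb hq E => /eqP; rewrite setD_eq0 => sub'.
have eqS : lex_choice prof S q = S by apply/eqP; rewrite eqEsubset sub sub'.
rewrite setU0 IH'; move: IH'; rewrite eqS; lia.
Qed.

Lemma L_step S q : q < size prof ->
  L S q.+1 = L S q :|: opt1 (best (nth (@dflt A) prof q) (S :\: L S q)).
Proof. by move=> hq; rewrite /L (@lex_step _ prof S q Hb hq). Qed.

Lemma L_mono S q : q < size prof -> L S q \subset L S q.+1.
Proof. by move=> hq; rewrite L_step // subsetUl. Qed.

Lemma L_irr S q : q < size prof ->
  L S q.+1 :&: (S :\: L S q) = opt1 (best (nth (@dflt A) prof q) (S :\: L S q)).
Proof.
move=> hq; rewrite L_step // setIUl.
have -> : L S q :&: (S :\: L S q) = set0.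
  by apply/setP=> y; rewrite !inE; case: (y \in L S q); rewrite ?andbF.
rewrite set0U; apply/setIidPl.
case E: (best _ _) => [x|] /=; last exact: sub0set.
by have [xin _] := best_some E; rewrite sub1set.
Qed.

Lemma L_gs (S S' : {set A}) q : q <= size prof -> S' \subset S -> L S q :&: S' \subset L S' q.
Proof.
move=> + sS; elim: q => [|q IH] hq; first by rewrite /L !lex0 set0I sub0set.
have IH' := IH (ltnW hq).
apply/subsetP => a; rewrite inE => /andP[aL aS'].
move: aL; rewrite L_step // inE => /orP[aL|].
  apply: (subsetP (L_mono _ hq)); apply: (subsetP IH'); by rewrite inE aL.
case E: (best _ _) => [x|] //=; last by rewrite inE. move/set1P => ax; rewrite -ax in E.
rewrite L_step // inE; case: (boolP (a \in L S' q)) => //= naL.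
have [ain Hx] := best_some E.
have po := Hpo hq.
rewrite (best_eq po (x := a)) ?inE //; first by rewrite naL.
move=> y; rewrite inE => /andP[nyL yS']; apply: Hx; rewrite inE (subsetP sS _ yS') andbT.
apply/negP => yL; apply/negP: nyL; rewrite negbK; apply: (subsetP IH'); by rewrite inE yL.
Qed.

End Fwd.

Section Bwd.
Variable A : finType.
Hypothesis hA : 0 < #|A|.
Variable C : choice_fun A.
Hypothesis HC : is_choice_rule C.
Hypothesis Hcf : capacity_filling C.
Hypothesis Hgs : gross_substitutes C.
Hypothesis Hmon : monotonicity C.
Hypothesis Hirr : irrelevance_accepted C.

Local Notation n := #|A|.

Lemma in_dom (S : {set A}) q : S != set0 -> 0 < q -> q <= n -> in_domain S q.
Proof. by move=> h1 h2 h3; rewrite /in_domain h1 h2 h3. Qed.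

Lemma gs_sub q (S S' : {set A}) a : in_domain S q -> S' \subset S -> a \in S' ->
  a \in C S q -> a \in C S' q.
Proof.
suff H : forall k (S : {set A}), #|S :\: S'| <= k -> in_domain S q -> S' \subset S ->
  a \in S' -> a \in C S q -> a \in C S' q by apply: H (leqnn _).
elim=> [|k IH] T hk dom sub aS' aC; case: (set_0Vmem (T :\: S')) => [E|[b hb]].
- have -> : S' = T by apply/eqP; rewrite eqEsubset sub -setD_eq0 E eqxx.
  by [].
- by move: hk; rewrite (cardsD1 b) hb.
- have -> : S' = T by apply/eqP; rewrite eqEsubset sub -setD_eq0 E eqxx.
  by [].
move: (hb); rewrite inE => /andP[bS' bT].
have aT := subsetP sub _ aS'.
have ab : a != b by apply/eqP => ab; rewrite -ab aS' in bS'.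
have aC' := Hgs dom aT bT ab aC.
apply: (IH (T :\ b)) => //.
- move: hk; rewrite (cardsD1 b) hb.
  have -> : T :\: S' :\ b = T :\ b :\: S' by rewrite setDDl setUC -setDDl.
  lia.
- move: dom; rewrite /in_domain => /andP[_ ->]; rewrite andbT.
  by apply/set0Pn; exists a; rewrite !inE aT ab.
- apply/subsetP => y yS'; rewrite !inE (subsetP sub _ yS') andbT.
  by apply/eqP => yb; rewrite -yb yS' in bS'.
Qed.

Definition B q : {set A} := if q is 0 then set0 else C setT q.
Definition D q (T : {set A}) : {set A} := C (T :|: B q) q.+1 :&: T.
Arguments D : simpl never.

Lemma setT_ne : [set: A] != set0.
Proof. by case/card_gt0P: hA => x _; apply/set0Pn; exists x. Qed.

Lemma B_card q : q < n -> #|B q| = q.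
Proof.
case: q => [|q] hq; first by rewrite cards0.
rewrite /B Hcf ?cardsT. apply/minn_idPr/ltnW/hq.
by apply: in_dom => //; [exact: setT_ne | exact: ltnW].
Qed.

Lemma B_sub q : B q \subset [set: A].
Proof. exact: subsetT. Qed.

Lemma CB q (T : {set A}) : 0 < q < n -> C (T :|: B q) q = B q.
Proof.
case: q => [//|q] /andP[_ hq].
have dT : in_domain [set: A] q.+1 by apply: in_dom => //; [exact: setT_ne | exact: ltnW].
have sub : B q.+1 \subset C (T :|: B q.+1) q.+1.
  apply/subsetP => x xB; apply: (gs_sub dT (subsetT _)); last exact: xB.
  by rewrite inE xB orbT.
have hB := B_card hq.
apply/eqP; rewrite eq_sym eqEcard sub /= hB ?Hcf.
  exact: geq_minr.
apply: in_dom => //; last exact: ltnW.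
apply/set0Pn.
have : 0 < #|B q.+1| by rewrite hB.
by case/card_gt0P => x xB; exists x; rewrite inE xB orbT.
Qed.


Definition U q := ~: B q.

Lemma UI0 q (T : {set A}) : T \subset U q -> T :&: B q = set0.
Proof.
move=> hT; apply/setP => y; rewrite !inE; case yT: (y \in T) => //=.
by have := subsetP hT y yT; rewrite inE => /negPf.
Qed.

Lemma D_card q (T : {set A}) : q < n -> T != set0 -> T \subset U q -> #|D q T| = 1.
Proof.
move=> hq hT hU.
set X := C (T :|: B q) q.+1.
have hTB : T :|: B q != set0.
  by case/set0Pn: hT => y yT; apply/set0Pn; exists y; rewrite inE yT.
have dom : in_domain (T :|: B q) q.+1 by apply: in_dom.
have hB := B_card hq.
have hX : #|X| = q.+1.
  rewrite /X Hcf // cardsU UI0 // cards0 hB.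
  have : 0 < #|T| by rewrite card_gt0.
  lia.
have BX : B q \subset X.
  rewrite /X; clear X hX; case: q hq hU hB dom {hTB} => [|q] hq hU hB dom; first exact: sub0set.
  rewrite -{1}(@CB q.+1 T) //; apply: Hmon => //.
  by case/set0Pn: hT => y yT; apply/set0Pn; exists y; rewrite inE yT.
have XTB : X \subset T :|: B q by case: (HC dom).
have XT : X :\: T = B q.
  apply/eqP; rewrite eqEsubset; apply/andP; split; apply/subsetP => y.
    rewrite inE => /andP[nyT yX]; move: (subsetP XTB y yX); rewrite inE.
    by rewrite (negPf nyT).
  move=> yB; rewrite inE (subsetP BX y yB) andbT.
  apply/negP => yT; have : y \in T :&: B q by rewrite inE yT.
  by rewrite UI0 // inE.
have := cardsID T X; rewrite XT hX hB /D -/X.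
lia.
Qed.

Lemma D_sub q T : D q T \subset T.
Proof. exact: subsetIr. Qed.

Lemma D_alpha q (T T' : {set A}) x : q < n -> T' \subset T -> x \in T' ->
  x \in D q T -> x \in D q T'.
Proof.
move=> hq sT xT'; rewrite /D !inE xT' andbT => /andP[xC xT].
have dom : in_domain (T :|: B q) q.+1.
  by apply: in_dom => //; apply/set0Pn; exists x; rewrite inE xT.
apply: (gs_sub dom _ _ xC); first exact: setSU.
by rewrite inE xT'.
Qed.

Lemma D_single q T : q < n -> T != set0 -> T \subset U q -> exists x, D q T = [set x].
Proof. by move=> hq hT hU; apply/cards1P/eqP; apply: D_card. Qed.

Lemma D_one q T x y : q < n -> T != set0 -> T \subset U q ->
  x \in D q T -> y \in D q T -> x = y.
Proof.
move=> hq hT hU; have [z ->] := D_single hq hT hU.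
by rewrite !inE => /eqP -> /eqP ->.
Qed.

Definition r q : rel A := fun x y =>
  if (x \in U q) && (y \in U q) then (x == y) || (x \in D q [set x; y])
  else if x \in U q then true else if y \in U q then false
  else (enum_rank x <= enum_rank y)%N.

Lemma pairU q x y : x \in U q -> y \in U q -> [set x; y] \subset U q.
Proof. by move=> hx hy; rewrite subUset !sub1set hx hy. Qed.

Lemma pair_ne (x y : A) : [set x; y] != set0.
Proof. by apply/set0Pn; exists x; rewrite !inE eqxx. Qed.

Lemma r_po q : q < n -> priority_ordering (r q).
Proof.
move=> hq; split.
- move=> x y; rewrite /r.
  case: (boolP (x \in U q)) => xU; case: (boolP (y \in U q)) => yU //=; last exact: leq_total.
  have [z Dz] := D_single hq (pair_ne x y) (pairU xU yU).
  have zD : z \in D q [set x; y] by rewrite Dz inE.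
  have := subsetP (D_sub q _) z zD.
  rewrite [[set y; x]]setUC Dz !inE => /orP[] /eqP ->; rewrite eqxx ?orbT //.
- move=> x y z; rewrite /r.
  case: (boolP (x \in U q)) => xU; case: (boolP (y \in U q)) => yU;
    case: (boolP (z \in U q)) => zU //=; last exact: leq_trans.
  case: (x =P y) => [<-//|nxy] /= hxy.
  case: (y =P z) => [<-|nyz] /= hyz; first by rewrite hxy orbT.
  case: (x =P z) => //= nxz.
  have T3 : [set x; y; z] \subset U q by rewrite !subUset !sub1set xU yU zU.
  have T3ne : [set x; y; z] != set0 by apply/set0Pn; exists x; rewrite !inE eqxx.
  have [w Dw] := D_single hq T3ne T3.
  have wD : w \in D q [set x; y; z] by rewrite Dw inE.
  have wIn : w \in [set x; y; z] by apply: (subsetP (D_sub q _)).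
  rewrite !inE in wIn.
  case/orP: wIn => [/orP[]|] /eqP wE; rewrite wE in wD.
  + apply: (D_alpha hq _ _ wD); last by rewrite !inE eqxx.
    by rewrite !subUset !sub1set !inE !eqxx !orbT.
  + have yD : y \in D q [set x; y].
      apply: (D_alpha hq _ _ wD); last by rewrite !inE eqxx orbT.
      by rewrite !subUset !sub1set !inE !eqxx !orbT.
    by case: nxy; apply: (D_one hq (pair_ne x y) (pairU xU yU) hxy yD).
  + have zD : z \in D q [set y; z].
      apply: (D_alpha hq _ _ wD); last by rewrite !inE eqxx orbT.
      by rewrite !subUset !sub1set !inE !eqxx !orbT.
    by case: nyz; apply: (D_one hq (pair_ne y z) (pairU yU zU) hyz zD).
- move=> x y; rewrite /r.
  case: (boolP (x \in U q)) => xU; case: (boolP (y \in U q)) => yU //=.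
    case: (x =P y) => [//|nxy] /= hxy; case: (y =P x) => [//|nyx] /= hyx.
    rewrite setUC in hyx.
    exact: (D_one hq (pair_ne x y) (pairU xU yU) hxy hyx).
  move=> h1 h2; apply: enum_rank_inj; apply: ord_inj; apply/eqP.
  by rewrite eqn_leq h1 h2.
Qed.

Lemma best_r q (T : {set A}) x : q < n -> T \subset U q -> x \in D q T ->
  best (r q) T = Some x.
Proof.
move=> hq hU xD; have xT := subsetP (D_sub q T) x xD.
have xT2 := xT; apply: best_eq (r_po hq) xT2 _ => y yT.
rewrite /r (subsetP hU x xT) (subsetP hU y yT) /=.
case: (x =P y) => //= _; apply: (D_alpha hq _ _ xD); last by rewrite !inE eqxx.
by rewrite subUset !sub1set xT yT.
Qed.


Definition C' (S : {set A}) q := if q is 0 then set0 else C S q.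

Lemma C'sub S q : q <= n -> S != set0 -> C' S q \subset S.
Proof.
case: q => [|q] hq hS; first exact: sub0set.
by case: (HC (@in_dom S q.+1 hS isT hq)).
Qed.

Lemma C'le S q : q < n -> S != set0 -> C' S q \subset C S q.+1.
Proof.
case: q => [|q] hq hS; first exact: sub0set.
exact: Hmon.
Qed.

Lemma RU S q : q < n -> S != set0 -> S :\: C' S q \subset U q.
Proof.
case: q => [|q] hq hS; apply/subsetP => y; rewrite !inE //.
move=> /andP[nyC yS]; apply/negP => yB.
have dT : in_domain [set: A] q.+1 by apply: in_dom => //; [exact: setT_ne | exact: ltnW].
by rewrite (gs_sub dT (subsetT S) yS yB) in nyC.
Qed.

Lemma key S q : q < n -> S != set0 -> S :\: C' S q != set0 ->
  C S q.+1 :&: (S :\: C' S q) = D q (S :\: C' S q).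
Proof.
case: q => [|q] hq hS hR; first by rewrite /D /= !setD0 setU0.
set R := S :\: C' S q.+1.
have hRU : R \subset U q.+1 by apply: RU.
have hRB : R :|: B q.+1 != set0.
  by case/set0Pn: hR => y yT; apply/set0Pn; exists y; rewrite inE yT.
have rej : rejected C S q.+1 = rejected C (R :|: B q.+1) q.+1.
  rewrite /rejected (@CB q.+1 R) //.
  rewrite setDUl setDv setU0; symmetry; apply/setDidPl.
  by rewrite -setI_eq0 UI0.
have := @Hirr S (R :|: B q.+1) q.+1 hS hRB isT hq rej.
by rewrite -rej /D.
Qed.

Lemma step S q : q < n -> S != set0 ->
  C S q.+1 = C' S q :|: opt1 (best (r q) (S :\: C' S q)).
Proof.
move=> hq hS.
have Csub : C S q.+1 \subset S by case: (HC (@in_dom S q.+1 hS isT hq)).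
have Cle := C'le hq hS.
case: (set_0Vmem (S :\: C' S q)) => [E|[y yR]].
  rewrite E best0 setU0; apply/eqP; rewrite eqEsubset Cle andbT.
  apply: subset_trans Csub _; by rewrite -setD_eq0 E.
have hR : S :\: C' S q != set0 by apply/set0Pn; exists y.
have [x Dx] := D_single hq hR (RU hq hS).
rewrite (@best_r q _ x hq (RU hq hS)); last by rewrite Dx inE.
rewrite /= -Dx -key //.
apply/setP => z; rewrite !inE.
case: (boolP (z \in C' S q)) => zC /=; first by rewrite (subsetP Cle z zC).
case: (boolP (z \in C S q.+1)) => //= h.
by rewrite (subsetP Csub z h).
Qed.


Definition prof := mkseq r n.

Lemma prof_b : forall i, i < size prof -> forall T, best (nth (@dflt A) prof i) T = None -> T = set0.
Proof.
move=> i; rewrite size_mkseq => hi T; rewrite nth_mkseq //; apply: best_none; exact: r_po.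
Qed.

Lemma main S q : S != set0 -> q <= n -> C' S q = lex_choice prof S q.
Proof.
move=> hS; elim: q => [|q IH] hq; first by rewrite lex0.
rewrite (@lex_step _ prof S q prof_b); last by rewrite size_mkseq.
by rewrite -IH ?(ltnW hq) // nth_mkseq // -step.
Qed.

Lemma bwd : lexicographic C.
Proof.
have sz : size prof == n by rewrite size_mkseq.
exists (Tuple sz); split.
  by move=> i; rewrite (tnth_nth (@dflt A)) /= nth_mkseq //; apply: r_po.
move=> S q; rewrite /in_domain => /andP[hS /andP[hq0 hq]].
rewrite /= -main //; by case: q hq0 {hq}.
Qed.

End Bwd.

Theorem theorem1 (A : finType) (hA : 0 < #|A|) (C : choice_fun A) :
  is_choice_rule C ->
  (lexicographic C <->
   [/\ capacity_filling C, gross_substitutes C, monotonicity C &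
       irrelevance_accepted C]).
Proof.
move=> HC; split; last first.
  by case=> cf gs mon irr; apply: (bwd hA HC cf gs mon irr).
case=> prof [Hpo Heq].
have sp : size prof = #|A| by rewrite size_tuple.
have Hpo' : forall i, i < size prof -> priority_ordering (nth (@dflt A) prof i).
  move=> i hi; rewrite sp in hi; have := Hpo (Ordinal hi).
  by rewrite (tnth_nth (@dflt A)).
have dq : forall (S : {set A}) (q : nat), in_domain S q -> q <= size prof.
  by move=> S q; rewrite /in_domain sp => /andP[_ /andP[_ h]].
split.
- move=> S q dom; rewrite Heq //; exact: L_card (dq _ _ dom).
- move=> S q dom a b aS bS ab aC.
  have aSb : a \in S :\ b by rewrite !inE ab aS.
  have dom' : in_domain (S :\ b) q.
    move: dom; rewrite /in_domain => /andP[_ ->]; rewrite andbT.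
    by apply/set0Pn; exists a.
  rewrite Heq // in aC; rewrite Heq //.
  apply: (subsetP (L_gs Hpo' (dq _ _ dom) (subD1set S b))).
  by rewrite inE aC aSb.
- move=> S q hS hq0 hq.
  have hq' : q < size prof by rewrite sp.
  have d1 : in_domain S q by rewrite /in_domain hS hq0 /= -sp ltnW.
  have d2 : in_domain S q.+1 by rewrite /in_domain hS /= -sp.
  rewrite (Heq S q d1) (Heq S q.+1 d2); exact: L_mono.
- move=> S S' q hS hS' hq0 hq.
  have hq' : q < size prof by rewrite sp.
  have d1 : forall T : {set A}, T != set0 -> in_domain T q by move=> T hT; rewrite /in_domain hT hq0 /= -sp ltnW.
  have d2 : forall T : {set A}, T != set0 -> in_domain T q.+1 by move=> T hT; rewrite /in_domain hT /= -sp.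
  rewrite /rejected (Heq S q (d1 _ hS)) (Heq S' q (d1 _ hS')) (Heq S q.+1 (d2 _ hS)) (Heq S' q.+1 (d2 _ hS')) => E.
  by rewrite !L_irr // E.
Qed.
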